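(* Let $f\in\mathbb{C}[X_1,\dots,X_n]$ be a radical polynomial, i.e. $f=f_1f_2\cdots f_r$ with each $f_i$ irreducible and the $f_i$ pairwise non-associate. Let $A=\mathbb{C}[X_1,\dots,X_n]/(f)$ and let $\bar f_i$ denote the image of $f_i$ in $A$. If $D$ is a locally nilpotent derivation of $A$, then $D(\bar f_i)\in \bar f_iA$ for all $1\le i\le r$.
   Context: A derivation of a $\mathbb{C}$-algebra $A$ is a $\mathbb{C}$-linear map $D:A\to A$ with $D(ab)=aD(b)+D(a)b$; it is locally nilpotent if for every $a\in A$ there is $n\in\mathbb{N}$ with $D^n(a)=0$. *)

(* Defs.v *)
From HB Require Import structures.
From mathcomp Require Import all_boot all_order all_algebra all_field.
Set Implicit Arguments. Unset Strict Implicit. Unset Printing Implicit Defensive.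
Import GRing.Theory.
Local Open Scope ring_scope.

(* Polynomial ring F[X_1,...,X_n], realized as the iterated univariate
   polynomial ring F[X_1][X_2]...[X_n]. *)
Fixpoint mpoly (F : fieldType) (n : nat) : idomainType :=
  match n with
  | 0 => F
  | n'.+1 => ({poly mpoly F n'} : idomainType)
  end.

Fixpoint mcst (F : fieldType) (n : nat) : F -> mpoly F n :=
  match n return F -> mpoly F n with
  | 0 => fun c => c
  | n'.+1 => fun c => (mcst n' c)%:P
  end.

Definition irreducible_elt (R : comUnitRingType) (p : R) : Prop :=
  p != 0 /\ p \isn't a GRing.unit /\
  forall a b : R, p = a * b -> a \is a GRing.unit \/ b \is a GRing.unit.

Definition associate (R : comUnitRingType) (p q : R) : Prop :=
  exists2 u : R, u \is a GRing.unit & p = u * q.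

(* A k-linear derivation of a k-algebra A, where the k-algebra structure of A
   is given by the ring map (embedding of scalars) iota : k -> A. *)
Definition is_derivation (k : fieldType) (A : comNzRingType) (iota : k -> A)
    (D : A -> A) : Prop :=
  (forall a b, D (a + b) = D a + D b) /\
  (forall (c : k) a, D (iota c * a) = iota c * D a) /\
  (forall a b, D (a * b) = a * D b + D a * b).

Definition locally_nilpotent (A : comNzRingType) (D : A -> A) : Prop :=
  forall a, exists m : nat, iter m D a = 0.

(* Main.v *)
Require Import Defs.
From HB Require Import structures.
From mathcomp Require Import all_boot all_order all_algebra all_field.
From Stdlib Require Import Classical.
Import GRing.Theory.
Local Open Scope ring_scope.
Set Implicit Arguments. Unset Strict Implicit.

Definition dv (R : comUnitRingType) (a b : R) : Prop := exists c, b = c * a.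

Definition primeE (R : comUnitRingType) (p : R) : Prop :=
  p != 0 /\ p \isn't a GRing.unit /\ forall a b, dv p (a * b) -> dv p a \/ dv p b.

Definition good (R : idomainType) : Prop :=
  exists w : R -> nat,
    (forall a b, a != 0 -> b != 0 -> w (a * b) = (w a + w b)%N) /\
    (forall a, a != 0 -> (w a == 0%N) = (a \is a GRing.unit)) /\
    (forall p : R, irreducible_elt p -> primeE p).

Section Gauss.
Variable R : idomainType.
Variable w : R -> nat.
Hypothesis wM : forall a b, a != 0 -> b != 0 -> w (a * b) = (w a + w b)%N.
Hypothesis wU : forall a, a != 0 -> (w a == 0%N) = (a \is a GRing.unit).
Hypothesis irrP : forall p : R, irreducible_elt p -> primeE p.

Lemma irr_div (a : R) : a != 0 -> a \isn't a GRing.unit ->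
  exists p c, irreducible_elt p /\ a = p * c.
Proof.
move: {2}(w a) (leqnn (w a)) => m; elim: m a => [|m IH] a Hw a0 aU.
  move: Hw; rewrite leqn0 wU // => H; by rewrite H in aU.
case: (classic (irreducible_elt a)) => Hi.
  by exists a, 1; rewrite mulr1.
have [b [c [abc [bU cU]]]] : exists b c, a = b * c /\ b \isn't a GRing.unit /\ c \isn't a GRing.unit.
  apply: NNPP => Hn; apply: Hi; split=> //; split=> // b c abc.
  case: (boolP (b \is a GRing.unit)) => bU; first by left.
  case: (boolP (c \is a GRing.unit)) => cU; first by right.
  by exfalso; apply: Hn; exists b, c.
have b0 : b != 0 by apply: contraNneq a0 => b0; rewrite abc b0 mul0r.
have c0 : c != 0 by apply: contraNneq a0 => c0; rewrite abc c0 mulr0.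
have : (w b <= m)%N.
  move: Hw; rewrite abc wM //.
  have : w c != 0%N by rewrite wU.
  case: (w c) => // k _; rewrite addnS ltnS => H; exact: leq_trans (leq_addr _ _) H.
move=> Hb; have [p [d [Hp bpd]]] := IH b Hb b0 bU.
by exists p, (d * c); split=> //; rewrite abc bpd mulrA.
Qed.

Lemma constdvP (p : R) (q : {poly R}) :
  (forall i, dv p q`_i) -> dv (p%:P) q.
Proof.
move=> H.
have H' : forall i, exists c, q`_i == c * p.
  by move=> i; have [c Hc] := H i; exists c; apply/eqP.
exists (\poly_(i < size q) xchoose (H' i)).
apply/polyP => i; rewrite coefMC coef_poly.
case: ltnP => Hi; first exact/eqP/(xchooseP (H' i)).
by rewrite mul0r nth_default.
Qed.

Lemma constdvE (p : R) (q : {poly R}) :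
  dv (p%:P) q -> forall i, dv p q`_i.
Proof. by move=> [c ->] i; exists c`_i; rewrite coefMC. Qed.


Lemma dv0 (p : R) : dv p 0. Proof. by exists 0; rewrite mul0r. Qed.
Lemma dvB (p a b : R) : dv p a -> dv p b -> dv p (a - b).
Proof. by move=> [c ->] [d ->]; exists (c - d); rewrite mulrBl. Qed.
Lemma dvD (p a b : R) : dv p a -> dv p b -> dv p (a + b).
Proof. by move=> [c ->] [d ->]; exists (c + d); rewrite mulrDl. Qed.
Lemma dvMl (p a b : R) : dv p b -> dv p (a * b).
Proof. by move=> [c ->]; exists (a * c); rewrite mulrA. Qed.

Lemma take1 (g : {poly R}) : take_poly 1 g = (g`_0)%:P.
Proof. by apply/polyP => i; rewrite coef_take_poly coefC; case: i. Qed.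

Lemma shift (p : R) (g h : {poly R}) : dv p g`_0 -> (forall i, dv p (g*h)`_i) ->
  forall i, dv p (drop_poly 1 g * h)`_i.
Proof.
move=> H0 H i.
have E : g * h = (g`_0)%:P * h + (drop_poly 1 g * h) * 'X.
  by rewrite -{1}(poly_take_drop 1 g) take1 expr1 mulrDl mulrAC.
have := H i.+1; rewrite E coefD coefMX /= coefCM => Hi.
have -> : (drop_poly 1 g * h)`_i = (g`_0 * h`_i.+1 + (drop_poly 1 g * h)`_i) - g`_0 * h`_i.+1.
  by rewrite addrAC subrr add0r.
apply: dvB; [exact: Hi | case: H0 => c ->; exists (c * h`_i.+1); by rewrite mulrAC].
Qed.

Lemma coef0_size (g : {poly R}) i : size g = 0%N -> g`_i = 0.
Proof. by move=> H; rewrite nth_default // H. Qed.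

Lemma constprime (p : R) : primeE p -> forall g h : {poly R},
  (forall i, dv p (g * h)`_i) -> (forall i, dv p g`_i) \/ (forall i, dv p h`_i).
Proof.
move=> [p0 [pU pP]].
suff H : forall n (g h : {poly R}), (size g + size h <= n)%N ->
  (forall i, dv p (g * h)`_i) -> (forall i, dv p g`_i) \/ (forall i, dv p h`_i).
  by move=> g h; exact: H _ g h (leqnn _).
elim=> [|n IH] g h Hs Hgh.
  left => i; rewrite coef0_size; [exact: dv0|]; apply/eqP; rewrite -leqn0; exact: leq_trans (leq_addr _ _) Hs.
have dropE : forall (q : {poly R}), dv p q`_0 -> (forall i, dv p (drop_poly 1 q)`_i) ->
    forall i, dv p q`_i.
  by move=> q H0 H1 [|i] //; rewrite -addn1 -coef_drop_poly; exact: H1.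
case: (boolP (size g == 0%N)) => [/eqP g0|g0].
  by left => i; rewrite coef0_size //; exact: dv0.
case: (boolP (size h == 0%N)) => [/eqP h0|h0].
  by right => i; rewrite coef0_size //; exact: dv0.
case: (classic (dv p g`_0)) => Hg0.
  have Hs' : (size (drop_poly 1 g) + size h <= n)%N.
    rewrite size_drop_poly; move: Hs g0; case: (size g) => // k; by rewrite subn1.
  case: (IH _ _ Hs' (shift Hg0 Hgh)) => H; last by right.
  by left; apply: dropE.
case: (classic (dv p h`_0)) => Hh0.
  have Hgh' : forall i, dv p (h * g)`_i by move=> i; rewrite mulrC.
  have Hs' : (size (drop_poly 1 h) + size g <= n)%N.
    rewrite size_drop_poly addnC; move: Hs h0; case: (size h) => // k; by rewrite subn1 addnS.
  case: (IH _ _ Hs' (shift Hh0 Hgh')) => H; last by left.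
  by right; apply: dropE.
by have := Hgh 0%N; rewrite coef0M => /pP [].
Qed.

Definition primitive (r : {poly R}) := forall p, primeE p -> ~ (forall i, dv p r`_i).

Lemma polyCU (c : R) : (c%:P \is a GRing.unit) = (c \is a GRing.unit).
Proof.
rewrite poly_unitE size_polyC coefC /=.
by case: (boolP (c == 0)) => [/eqP ->|]; rewrite ?unitr0.
Qed.

Lemma wpos (p : R) : p != 0 -> p \isn't a GRing.unit -> (0 < w p)%N.
Proof. by move=> p0 pU; rewrite lt0n wU. Qed.

Lemma content (r : {poly R}) : r != 0 ->
  exists c r0, c != 0 /\ primitive r0 /\ r = c%:P * r0.
Proof.
suff H : forall m (r : {poly R}), w (lead_coef r) = m -> r != 0 ->
  exists c r0, c != 0 /\ primitive r0 /\ r = c%:P * r0 by exact: H.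
elim/ltn_ind => m IH {}r Hw r0.
case: (classic (primitive r)) => Pr.
  by exists 1, r; rewrite oner_neq0 mul1r.
have [p [pp Hp]] : exists p, primeE p /\ (forall i, dv p r`_i).
  apply: NNPP => Hn; apply: Pr => p pp Hp; apply: Hn; by exists p.
have [r' Er] := constdvP Hp.
have r'0 : r' != 0 by apply: contraNneq r0 => r'0; rewrite Er r'0 mul0r.
have [p0 [pU _]] := pp.
have Hlt : (w (lead_coef r') < m)%N.
  rewrite -Hw Er lead_coefM lead_coefC wM ?lead_coef_eq0 //.
  by rewrite -[X in (X < _)%N]addn0 ltn_add2l wpos.
have [c [r1 [c0 [Pr1 E1]]]] := IH _ Hlt r' erefl r'0.
exists (p * c), r1; split; first by rewrite mulf_neq0.
by split=> //; rewrite Er E1 mulrC mulrA -polyCM.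
Qed.

Lemma cancel_const (a : R) : a != 0 -> forall f Q r0 : {poly R},
  primitive r0 -> a%:P * f = Q * r0 -> exists Q', f = Q' * r0.
Proof.
suff H : forall m (a : R), w a = m -> a != 0 -> forall f Q r0 : {poly R},
  primitive r0 -> a%:P * f = Q * r0 -> exists Q', f = Q' * r0 by exact: H.
elim/ltn_ind => m IH {}a Hw a0 f Q r0 Pr E.
case: (boolP (a \is a GRing.unit)) => aU.
  exists (a^-1%:P * Q); rewrite -mulrA -E mulrA -polyCM mulVr //.
  by rewrite mul1r.
have [p [c [Hp ac]]] := irr_div a0 aU.
have pp := irrP Hp.
have [p0 [pU _]] := pp.
have c0 : c != 0 by apply: contraNneq a0 => c0; rewrite ac c0 mulr0.
have HQ : forall i, dv p (Q * r0)`_i.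
  move=> i; rewrite -E ac polyCM -mulrA coefCM; by exists ((c%:P * f)`_i); rewrite mulrC.
case: (constprime pp HQ) => HQ'; last by exfalso; exact: Pr p pp HQ'.
have [Q1 EQ] := constdvP HQ'.
have E' : c%:P * f = Q1 * r0.
  have P0 : p%:P != 0 by rewrite polyC_eq0.
  apply: (mulfI P0); rewrite mulrA -polyCM -ac E EQ -mulrA.
  by rewrite mulrCA.
have Hlt : (w c < m)%N.
  by rewrite -Hw ac wM // -[X in (X < _)%N]add0n ltn_add2r wpos.
exact: IH _ Hlt c erefl c0 f Q1 r0 Pr E'.
Qed.

Lemma modp_J (f r s h : {poly R}) : dv f (r * h) -> dv f (s * h) -> dv f ((s %% r) * h).
Proof.
move=> [b Eb] [a Ea].
have -> : s %% r = (lead_coef r ^+ scalp s r)%:P * s - (s %/ r) * r.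
  by rewrite mul_polyC Pdiv.Idomain.divp_eq addrC addKr.
exists ((lead_coef r ^+ scalp s r)%:P * a - (s %/ r) * b).
by rewrite mulrBl -!mulrA Ea Eb mulrBl !mulrA.
Qed.

Lemma polyprime (f : {poly R}) : irreducible_elt f -> primeE f.
Proof.
move=> Hf; have [f0 [fU firr]] := Hf; split=> //; split=> // g h Hgh.
case: (boolP (size f == 1%N)) => sf.
  have Ef : f = (f`_0)%:P by apply: size1_polyC; rewrite (eqP sf).
  have irr0 : irreducible_elt f`_0.
    split; first by apply: contraNneq f0 => H; rewrite Ef H.
    split; first by rewrite -polyCU -Ef.
    move=> a b Eab; have := firr a%:P b%:P; rewrite -polyCM -Eab -Ef !polyCU.
    by apply.
  have pp := irrP irr0.
  rewrite Ef in Hgh *.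
  case: (constprime pp (constdvE Hgh)) => H; [left|right]; exact: constdvP.
have Pf : primitive f.
  move=> p pp Hp; have [f' Ef'] := constdvP Hp; have [p0 [pU _]] := pp.
  case: (firr f' p%:P Ef') => H; last by move: H; rewrite polyCU (negbTE pU).
  move: H; rewrite poly_unitE => /andP [/eqP s1 _].
  by move: sf; rewrite Ef' mulrC mul_polyC size_scale // s1.
suff H : forall m (r : {poly R}), r != 0 -> (size r <= m)%N -> dv f (r * h) ->
    dv f g \/ dv f h.
  by apply: (H (size f) f f0 (leqnn _)); exists h; rewrite mulrC.
elim=> [|m IH] r r0 sr Jr.
  by move: sr; rewrite leqn0 size_poly_eq0 (negbTE r0).
have Jg : dv f (g * h) by [].
have Jf : dv f (f * h) by exists h; rewrite mulrC.
have ltm : forall s, (size (s %% r)%R <= m)%N.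
  move=> s; rewrite -ltnS; apply: leq_trans sr; by rewrite Pdiv.Idomain.ltn_modp.
case: (boolP (f %% r == 0)) => t1; last exact: IH _ t1 (ltm f) (modp_J Jr Jf).
case: (boolP (g %% r == 0)) => t2; last exact: IH _ t2 (ltm g) (modp_J Jr Jg).
have lr0 : lead_coef r != 0 by rewrite lead_coef_eq0.
have Ef := Pdiv.Idomain.divp_eq f r; rewrite (eqP t1) addr0 in Ef.
have Eg := Pdiv.Idomain.divp_eq g r; rewrite (eqP t2) addr0 in Eg.
have [c [r1 [c0 [Pr1 Er]]]] := content r0.
have [Q' EQ'] : exists Q', f = Q' * r1.
  apply: (@cancel_const (lead_coef r ^+ scalp f r) (expf_neq0 _ lr0) f ((f %/ r) * c%:P) r1 Pr1).
  by rewrite mul_polyC Ef Er mulrA.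
case: (firr _ _ EQ') => HU.
  have [Q'' EQ''] : exists Q'', g = Q'' * r1.
    apply: (@cancel_const (lead_coef r ^+ scalp g r) (expf_neq0 _ lr0) g ((g %/ r) * c%:P) r1 Pr1).
    by rewrite mul_polyC Eg Er mulrA.
  left; exists (Q'' * Q'^-1); rewrite EQ'' EQ' mulrA mulrVK //.
move: HU; rewrite poly_unitE => /andP [/eqP s1 _].
have Er1 : r1 = (r1`_0)%:P by apply: size1_polyC; rewrite s1.
set e := c * r1`_0.
have e0 : e != 0.
  by apply: contraNneq r0 => H; rewrite Er Er1 -polyCM -/e H polyC0.
have [b Eb] := Jr.
right; apply: (@cancel_const e e0 h b f Pf).
by rewrite /e polyCM -Er1 -Er.
Qed.

End Gauss.

Lemma good_poly (R : idomainType) : good R -> good {poly R}.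
Proof.
move=> [w [wM [wU irrP]]].
exists (fun p : {poly R} => ((size p).-1 + w (lead_coef p))%N).
split.
  move=> p q p0 q0; rewrite size_mul // lead_coefM wM ?lead_coef_eq0 //.
  have := p0; rewrite -size_poly_eq0; case: (size p) => // k _.
  have := q0; rewrite -size_poly_eq0; case: (size q) => // l _.
  by rewrite addSn addnS /= addnACA.
split.
  move=> p p0; rewrite poly_unitE addn_eq0.
  have := p0; rewrite -size_poly_eq0 lead_coefE.
  case E: (size p) => [|[|k]] //= _.
  by rewrite wU // -[0%N]/((1).-1) -E -lead_coefE lead_coef_eq0.
exact: polyprime wM wU irrP.
Qed.

Lemma good_mpoly (F : fieldType) n : good (mpoly F n).
Proof.
elim: n => [|n IH].
  exists (fun _ => 0%N); split=> //; split.
    by move=> a a0; rewrite /= unitfE a0.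
  by move=> p [p0 [pU _]]; exfalso; move: pU; rewrite /= unitfE p0.
exact: good_poly IH.
Qed.

Lemma prime_prod (R : comUnitRingType) (I : Type) (p a : R) (s : seq I)
  (P : pred I) (f : I -> R) : primeE p ->
  dv p (a * \prod_(j <- s | P j) f j) -> dv p a \/ exists j, P j /\ dv p (f j).
Proof.
move=> pp; have [_ [_ pP]] := pp.
elim: s a => [|x s IH] a; first by rewrite big_nil mulr1; left.
rewrite big_cons; case: (boolP (P x)) => Px H; last exact: IH.
rewrite mulrCA in H; case: (pP _ _ H) => H'; first by right; exists x.
exact: IH.
Qed.

Unset Implicit Arguments.
Set Strict Implicit.

Theorem corollary2p2
  (F : closedFieldType) (hF : [pchar F] =i pred0) (n r : nat)
  (fs : 'I_r -> mpoly F n)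
  (hirr : forall i, irreducible_elt (fs i))
  (hnassoc : forall i j, i != j -> ~ associate (fs i) (fs j))
  (A : comNzRingType) (pi : {rmorphism mpoly F n -> A})
  (hsurj : forall a : A, exists p : mpoly F n, pi p = a)
  (hker : forall p : mpoly F n,
      pi p = 0 <-> exists q : mpoly F n, p = q * \prod_(i < r) fs i)
  (D : A -> A)
  (hD : is_derivation (fun c : F => pi (mcst n c)) D)
  (hlnd : locally_nilpotent D) :
  forall i : 'I_r, exists a : A, D (pi (fs i)) = pi (fs i) * a.
Proof.
move=> i.
have [w [_ [_ irrP]]] := good_mpoly F n.
have pp := irrP _ (hirr i).
set g := \prod_(j < r | j != i) fs j.
have Eprod : \prod_(j < r) fs j = fs i * g by rewrite (bigD1 i).
have Hz : pi (fs i * g) = 0 by apply/hker; exists 1; rewrite mul1r Eprod.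
have [hadd [_ hmul]] := hD.
have D0 : D 0 = 0 by apply: (addrI (D 0)); rewrite -hadd !addr0.
have := hmul (pi (fs i)) (pi g); rewrite -rmorphM Hz D0 => E.
have [d Hd] := hsurj (D (pi (fs i))).
have [e He] := hsurj (D (pi g)).
have : pi (d * g + fs i * e) = 0.
  by rewrite rmorphD !rmorphM Hd He addrC -E.
move/hker => [q Eq].
have Hdv : dv (fs i) (d * \prod_(j < r | j != i) fs j).
  exists (q * g - e); apply: (addIr (fs i * e)); rewrite -/g Eq Eprod mulrBl.
  by rewrite [e * _]mulrC subrK -mulrA [g * _]mulrC.
case: (prime_prod pp Hdv) => [[c Ec]|[j [ji [c Ec]]]].
  by exists (pi c); rewrite -Hd Ec rmorphM mulrC.
have [_ [fiU _]] := hirr i.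
have [_ [_ fjirr]] := hirr j.
case: (fjirr _ _ Ec) => H; last by rewrite H in fiU.
by exfalso; apply: (hnassoc j i ji); exists c.
Qed.
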